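(* Let $\mathbb{F}$ be a field and $n\in\{2,3,4\}$. For every integer $l$ with $1\le l\le 2^{n-2}$ there exists a unital $\mathbb{F}$-algebra $\mathcal{A}$ with $\dim\mathcal{A}=n$ and $l(\mathcal{A})=l$.
   Context: Algebras are finite-dimensional, unital, not necessarily associative. For a finite generating set $S$ of $\mathcal{A}$, a word in $S$ is any product (with any bracketing) of finitely many elements of $S$; its length is the number of factors, and $1$ is a word of length $0$. $L_i(S)$ is the linear span of all words in $S$ of length at most $i$. The length of $S$ is $l(S)=\min\{k\ge0: L_k(S)=\mathcal{A}\}$, and $l(\mathcal{A})=\max\{l(S): S\text{ a finite generating set of }\mathcal{A}\}$. *)

(* Defs.v *)
From HB Require Import structures.
From mathcomp Require Import all_boot all_order all_algebra.
Set Implicit Arguments. Unset Strict Implicit. Unset Printing Implicit Defensive.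
Import GRing.Theory.
Local Open Scope ring_scope.

(* A (not necessarily associative) unital algebra of dimension n over F,
   with carrier F^n = 'rV[F]_n and multiplication given by structure
   constants (hence automatically bilinear). *)
Record nalgebra (F : fieldType) (n : nat) := NAlgebra {
  strc : 'I_n -> 'I_n -> 'rV[F]_n;
  one_el : 'rV[F]_n;
}.

Definition amul (F : fieldType) (n : nat) (A : nalgebra F n)
  (x y : 'rV[F]_n) : 'rV[F]_n :=
  \sum_(i < n) \sum_(j < n) (x 0 i * y 0 j) *: strc A i j.

Definition is_unital (F : fieldType) (n : nat) (A : nalgebra F n) : Prop :=
  forall x, amul A (one_el A) x = x /\ amul A x (one_el A) = x.

Inductive is_word (F : fieldType) (n : nat) (A : nalgebra F n)
  (S : seq 'rV[F]_n) : nat -> 'rV[F]_n -> Prop :=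
| word_one : is_word A S 0 (one_el A)
| word_gen : forall s, s \in S -> is_word A S 1 s
| word_mul : forall a b x y, is_word A S a x -> is_word A S b y ->
    is_word A S (a + b) (amul A x y).

(* v belongs to L_k(S): the linear span of words of length at most k. *)
Definition in_L (F : fieldType) (n : nat) (A : nalgebra F n)
  (S : seq 'rV[F]_n) (k : nat) (v : 'rV[F]_n) : Prop :=
  exists (m : nat) (c : 'I_m -> F) (w : 'I_m -> 'rV[F]_n),
    (forall i, exists j, (j <= k)%N /\ is_word A S j (w i)) /\
    v = \sum_(i < m) c i *: w i.

Definition L_full (F : fieldType) (n : nat) (A : nalgebra F n)
  (S : seq 'rV[F]_n) (k : nat) : Prop := forall v, in_L A S k v.

Definition generates (F : fieldType) (n : nat) (A : nalgebra F n)
  (S : seq 'rV[F]_n) : Prop := exists k, L_full A S k.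

Definition set_length_is (F : fieldType) (n : nat) (A : nalgebra F n)
  (S : seq 'rV[F]_n) (k : nat) : Prop :=
  L_full A S k /\ forall j, L_full A S j -> (k <= j)%N.

Definition alg_length_is (F : fieldType) (n : nat) (A : nalgebra F n)
  (l : nat) : Prop :=
  (exists S, generates A S /\ set_length_is A S l) /\
  (forall S k, generates A S -> set_length_is A S k -> (k <= l)%N).

(* Main.v *)
Require Import Defs.
From mathcomp Require Import all_boot all_order all_algebra.
Set Implicit Arguments. Unset Strict Implicit. Unset Printing Implicit Defensive.
Import GRing.Theory.
Local Open Scope ring_scope.

Section Gen.
Variables (F : fieldType) (n : nat) (A : nalgebra F n).
Local Notation vec := 'rV[F]_n.

Lemma amulDl x1 x2 y : amul A (x1 + x2) y = amul A x1 y + amul A x2 y.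
Proof.
rewrite /amul -big_split; apply: eq_bigr => i _; rewrite -big_split.
by apply: eq_bigr => j _; rewrite !mxE mulrDl scalerDl.
Qed.
Lemma amulZl a x y : amul A (a *: x) y = a *: amul A x y.
Proof.
rewrite /amul scaler_sumr; apply: eq_bigr => i _; rewrite scaler_sumr.
by apply: eq_bigr => j _; rewrite !mxE scalerA mulrA.
Qed.
Lemma amul0l y : amul A 0 y = 0.
Proof. by rewrite /amul big1 // => i _; rewrite big1 // => j _; rewrite mxE mul0r scale0r. Qed.
Lemma amulDr x y1 y2 : amul A x (y1 + y2) = amul A x y1 + amul A x y2.
Proof.
rewrite /amul -big_split; apply: eq_bigr => i _; rewrite -big_split.
by apply: eq_bigr => j _; rewrite !mxE mulrDr scalerDl.
Qed.
Lemma amulZr a x y : amul A x (a *: y) = a *: amul A x y.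
Proof.
rewrite /amul scaler_sumr; apply: eq_bigr => i _; rewrite scaler_sumr.
by apply: eq_bigr => j _; rewrite !mxE scalerA mulrCA.
Qed.
Lemma amul0r x : amul A x 0 = 0.
Proof. by rewrite /amul big1 // => i _; rewrite big1 // => j _; rewrite mxE mulr0 scale0r. Qed.

Lemma amul_suml m (c : 'I_m -> F) w y :
  amul A (\sum_(i < m) c i *: w i) y = \sum_(i < m) c i *: amul A (w i) y.
Proof.
rewrite (big_morph (fun x => amul A x y) (fun x1 x2 => amulDl x1 x2 y) (amul0l y)).
by apply: eq_bigr => i _; rewrite amulZl.
Qed.
Lemma amul_sumr m (c : 'I_m -> F) w x :
  amul A x (\sum_(i < m) c i *: w i) = \sum_(i < m) c i *: amul A x (w i).
Proof.
rewrite (big_morph (fun y => amul A x y) (fun y1 y2 => amulDr x y1 y2) (amul0r x)).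
by apply: eq_bigr => i _; rewrite amulZr.
Qed.

Lemma in_L0 S k : in_L A S k 0.
Proof.
exists 0%N, (fun _ => 0), (fun _ => 0); split; last by rewrite big_ord0.
by case.
Qed.

Lemma in_LZ S k a v : in_L A S k v -> in_L A S k (a *: v).
Proof.
move=> [m [c [w [Hw ->]]]]; exists m, (fun i => a * c i), w; split => //.
by rewrite scaler_sumr; apply: eq_bigr => i _; rewrite scalerA.
Qed.

Lemma in_LD S k u v : in_L A S k u -> in_L A S k v -> in_L A S k (u + v).
Proof.
move=> [m1 [c1 [w1 [Hw1 ->]]]] [m2 [c2 [w2 [Hw2 ->]]]].
exists (m1 + m2)%N,
  (fun i => match split i with inl i1 => c1 i1 | inr i2 => c2 i2 end),
  (fun i => match split i with inl i1 => w1 i1 | inr i2 => w2 i2 end).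
split; first by move=> i; case: (split i).
rewrite big_split_ord /=; congr (_ + _); apply: eq_bigr => i _.
  by rewrite (unsplitK (inl _ i)).
by rewrite (unsplitK (inr _ i)).
Qed.

Lemma in_L_sum S k m (G : 'I_m -> vec) :
  (forall i, in_L A S k (G i)) -> in_L A S k (\sum_(i < m) G i).
Proof.
move=> H; apply: (big_ind (in_L A S k)) => //; first exact: in_L0.
exact: in_LD.
Qed.

Lemma in_L_word S k j w : (j <= k)%N -> is_word A S j w -> in_L A S k w.
Proof.
move=> Hj Hw; exists 1%N, (fun _ => 1), (fun _ => w); split.
  by move=> _; exists j.
by rewrite big_ord1 scale1r.
Qed.

Lemma in_L_mono S k k' v : (k <= k')%N -> in_L A S k v -> in_L A S k' v.
Proof.
move=> Hk [m [c [w [Hw ->]]]]; exists m, c, w; split => // i.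
have [j [Hj Hwj]] := Hw i; exists j; split => //; exact: leq_trans Hk.
Qed.

Lemma in_L_bind S T k v :
  (forall j w, (j <= k)%N -> is_word A T j w -> in_L A S k w) ->
  in_L A T k v -> in_L A S k v.
Proof.
move=> H [m [c [w [Hw ->]]]]; apply: in_L_sum => i; apply: in_LZ.
have [j [Hj Hwj]] := Hw i; exact: H Hwj.
Qed.

Lemma in_L_mul S a b x y :
  in_L A S a x -> in_L A S b y -> in_L A S (a + b) (amul A x y).
Proof.
move=> [m1 [c1 [w1 [Hw1 ->]]]] [m2 [c2 [w2 [Hw2 ->]]]].
rewrite amul_suml; apply: in_L_sum => i; apply: in_LZ.
rewrite amul_sumr; apply: in_L_sum => j; apply: in_LZ.
have [j1 [Hj1 W1]] := Hw1 i; have [j2 [Hj2 W2]] := Hw2 j.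
apply: (in_L_word _ (word_mul W1 W2)); exact: leq_add.
Qed.

Lemma word_mono S T :
  (forall t, t \in T -> in_L A S 1 t) ->
  forall j w, is_word A T j w -> in_L A S j w.
Proof.
move=> HT j w; elim => {j w}.
- exact: (in_L_word (leqnn 0) (word_one _ _)).
- by move=> s /HT.
- by move=> a b x y _ Hx _ Hy; apply: in_L_mul.
Qed.

End Gen.

Section Graded.
Variables (F : fieldType) (n : nat) (A : nalgebra F n).
Variables (deg : 'I_n -> nat) (i0 : 'I_n) (D : nat).
Hypothesis Hone : one_el A = delta_mx 0 i0.
Hypothesis Hdeg0 : forall k, (deg k == 0%N) = (k == i0).
Hypothesis Hgr : forall i j k, strc A i j 0 k != 0 -> deg k = (deg i + deg j)%N.
Hypothesis HD : forall k, (deg k <= D)%N.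

Definition filt (l : nat) (v : 'rV[F]_n) := forall k, (deg k < l)%N -> v 0 k = 0.
Definition top (l : nat) (v : 'rV[F]_n) := forall k, (l < deg k)%N -> v 0 k = 0.

Lemma amul_coord x y k :
  amul A x y 0 k = \sum_i \sum_j x 0 i * y 0 j * strc A i j 0 k.
Proof.
rewrite /amul summxE; apply: eq_bigr => i _; rewrite summxE.
by apply: eq_bigr => j _; rewrite mxE.
Qed.

Lemma filt_mul a b x y : filt a x -> filt b y -> filt (a + b) (amul A x y).
Proof.
move=> hx hy k hk; rewrite amul_coord big1 // => i _; rewrite big1 // => j _.
case: (ltnP (deg i) a) => [/hx -> | hi]; first by rewrite !mul0r.
case: (ltnP (deg j) b) => [/hy -> | hj]; first by rewrite mulr0 mul0r.
have [->|nz] := eqVneq (strc A i j 0 k) 0; first by rewrite mulr0.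
have := Hgr nz => e; exfalso; move: hk; rewrite e ltnNge.
by rewrite (leq_add hi hj).
Qed.

Lemma top_mul a b x y : top a x -> top b y -> top (a + b) (amul A x y).
Proof.
move=> hx hy k hk; rewrite amul_coord big1 // => i _; rewrite big1 // => j _.
case: (ltnP a (deg i)) => [/hx -> | hi]; first by rewrite !mul0r.
case: (ltnP b (deg j)) => [/hy -> | hj]; first by rewrite mulr0 mul0r.
have [->|nz] := eqVneq (strc A i j 0 k) 0; first by rewrite mulr0.
have := Hgr nz => e; exfalso; move: hk; rewrite e ltnNge.
by rewrite (leq_add hi hj).
Qed.

Definition nilp (S : seq 'rV[F]_n) := map (fun s : 'rV[F]_n => s - s 0 i0 *: delta_mx 0 i0) S.

Lemma nilp_filt S j w : is_word A (nilp S) j w -> filt j w.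
Proof.
elim => {j w}.
- by move=> k.
- move=> s /mapP [t _ ->] k; rewrite ltnS leqn0 Hdeg0 => /eqP ->.
  by rewrite !mxE !eqxx mulr1 subrr.
- by move=> a b x y _ hx _ hy; apply: filt_mul.
Qed.

Lemma one_in_L1 S : in_L A S 1 (delta_mx 0 i0).
Proof. rewrite -Hone; apply: (in_L_word (leq0n 1) (word_one _ _)). Qed.

Lemma upper S : generates A S -> L_full A S D.
Proof.
move=> [K HK] v; have [m [c [ws [Hws ->]]]] := HK v.
apply: in_L_sum => i; apply: in_LZ; have [j [_ hw]] := Hws i; set w := ws i in hw *.
have h1 : in_L A (nilp S) j w.
  apply: (word_mono _ hw) => t ht.
  have -> : t = (t - t 0 i0 *: delta_mx 0 i0) + t 0 i0 *: delta_mx 0 i0.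
    by rewrite subrK.
  apply: in_LD; last by apply: in_LZ; apply: one_in_L1.
  by apply: (in_L_word (leqnn 1)); apply: word_gen; apply: map_f.
have h2 : in_L A (nilp S) D w.
  have [m' [c' [w2 [Hw2 ->]]]] := h1.
  apply: in_L_sum => i'; apply: in_LZ; have [j' [_ hw']] := Hw2 i'.
  set w' := w2 i' in hw' *.
  case: (leqP j' D) => hj'; first exact: in_L_word hw'.
  have -> : w' = 0.
    apply/rowP => k; rewrite mxE; apply: (nilp_filt hw').
    exact: leq_ltn_trans (HD k) hj'.
  exact: in_L0.
move: h2; apply: in_L_bind => j' w' hj' hw'.
apply: (in_L_mono hj'); apply: (word_mono _ hw') => t /mapP [s hs ->].
apply: in_LD; first by apply: (in_L_word (leqnn 1)); apply: word_gen.
by rewrite -scaleN1r; apply: in_LZ; apply: in_LZ; apply: one_in_L1.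
Qed.

Lemma word_top S : (forall s, s \in S -> top 1 s) ->
  forall j w, is_word A S j w -> top j w.
Proof.
move=> HS j w; elim => {j w}.
- move=> k hk; rewrite Hone mxE; have [e|ne] := eqVneq k i0.
    by subst k; move: hk; have := Hdeg0 i0; rewrite eqxx => /eqP ->.
  by rewrite /= mulr0n.
- by move=> s /HS.
- by move=> a b x y _ hx _ hy; apply: top_mul.
Qed.

Lemma in_L_top S l v : (forall s, s \in S -> top 1 s) -> in_L A S l v -> top l v.
Proof.
move=> HS [m [c [w [Hw ->]]]] k hk; rewrite summxE big1 // => i _.
have [j [hj hwj]] := Hw i; rewrite mxE (word_top HS hwj) ?mulr0 //.
exact: leq_ltn_trans hj hk.
Qed.

Theorem graded_length S kD :
  (forall s, s \in S -> top 1 s) -> deg kD = D ->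
  (forall k, exists j, (j <= D)%N /\ is_word A S j (delta_mx 0 k)) ->
  alg_length_is A D.
Proof.
move=> HS HkD Hw.
have full : L_full A S D.
  move=> v; rewrite (row_sum_delta v); apply: in_L_sum => k; apply: in_LZ.
  by have [j [hj hwj]] := Hw k; exact: in_L_word hwj.
split.
  exists S; split; first by exists D.
  split => // j hj; rewrite leqNgt; apply/negP => hlt.
  have := in_L_top HS (hj (delta_mx 0 kD)) (k := kD).
  rewrite HkD => /(_ hlt) /eqP; by rewrite mxE !eqxx oner_eq0.
move=> T k hT [_ hmin]; apply: hmin; exact: upper.
Qed.
End Graded.

Section Alg.
Variable F : fieldType.

Definition gstrc m (deg : 'I_m.+1 -> nat) (i j : 'I_m.+1) : 'rV[F]_m.+1 :=
  if i == ord0 then delta_mx 0 j else if j == ord0 then delta_mx 0 i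
  else \row_k ((deg k == deg i + deg j)%N)%:R.

Definition galg m deg : nalgebra F m.+1 := NAlgebra (@gstrc m deg) (delta_mx 0 ord0).

Lemma amul_deltal n (A : nalgebra F n) i y :
  amul A (delta_mx 0 i) y = \sum_j y 0 j *: strc A i j.
Proof.
rewrite /amul (bigD1 i) //= [X in _ + X]big1 ?addr0 => [|i' ne].
  by apply: eq_bigr => j _; rewrite mxE !eqxx mul1r.
by rewrite big1 // => j _; rewrite mxE eqxx (negbTE ne) mul0r scale0r.
Qed.

Lemma amul_deltar n (A : nalgebra F n) j x :
  amul A x (delta_mx 0 j) = \sum_i x 0 i *: strc A i j.
Proof.
rewrite /amul; apply: eq_bigr => i _.
rewrite (bigD1 j) //= [X in _ + X]big1 ?addr0 => [|j' ne].
  by rewrite mxE !eqxx mulr1.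
by rewrite mxE eqxx (negbTE ne) mulr0 scale0r.
Qed.

Lemma amul_delta n (A : nalgebra F n) i j :
  amul A (delta_mx 0 i) (delta_mx 0 j) = strc A i j.
Proof.
rewrite amul_deltal (bigD1 j) //= [X in _ + X]big1 ?addr0 => [|j' ne].
  by rewrite mxE !eqxx scale1r.
by rewrite mxE eqxx (negbTE ne) scale0r.
Qed.

Lemma galg_unital m deg : is_unital (@galg m deg).
Proof.
move=> x; split.
  by rewrite amul_deltal [RHS]row_sum_delta; apply: eq_bigr => j _; rewrite /= /gstrc eqxx.
rewrite amul_deltar [RHS]row_sum_delta; apply: eq_bigr => i _; rewrite /= /gstrc eqxx.
by case: eqP => // ->.
Qed.

Lemma galg_graded m deg : deg ord0 = 0%N ->
  forall i j k, strc (@galg m deg) i j 0 k != 0 -> deg k = (deg i + deg j)%N.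
Proof.
move=> h0 i j k; rewrite /= /gstrc.
have dl : forall a b : 'I_m.+1, (delta_mx 0 a : 'rV[F]_m.+1) 0 b != 0 -> b = a.
  by move=> a b; rewrite mxE; case: (b =P a) => // _; rewrite andbF /= eqxx.
case: (i =P ord0) => [ei | _]; first by move/dl => ->; rewrite ei h0.
case: (j =P ord0) => [ej | _]; first by move/dl => ->; rewrite ej h0 addn0.
by rewrite mxE; case: (deg k =P (deg i + deg j)%N) => // _; rewrite /= eqxx.
Qed.

Lemma delta_top m (deg : 'I_m.+1 -> nat) l i :
  (deg i <= l)%N -> top deg l (delta_mx 0 i : 'rV[F]_m.+1).
Proof.
move=> hi k hk; rewrite mxE eqxx /=; case: eqP => // e; subst k.
by move: hk; rewrite ltnNge hi.
Qed.

Lemma galg_ok m (deg : 'I_m.+1 -> nat) D S kD :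
  (forall k, (deg k == 0%N) = (k == ord0)) -> (forall k, (deg k <= D)%N) ->
  deg kD = D ->
  (forall s, s \in S -> exists i, deg i = 1%N /\ s = delta_mx 0 i) ->
  (forall k, exists j, (j <= D)%N /\ is_word (@galg m deg) S j (delta_mx 0 k)) ->
  is_unital (@galg m deg) /\ alg_length_is (@galg m deg) D.
Proof.
move=> h0 hD hkD hS hw; split; first exact: galg_unital.
have d0 : deg ord0 = 0%N by apply/eqP; rewrite h0.
apply: (@graded_length _ _ (galg deg) deg ord0 D erefl h0 (galg_graded d0) hD S kD) => //.
by move=> s /hS [i [hi ->]]; apply: delta_top; rewrite hi.
Qed.

Lemma wmul m deg S a b i j k :
  is_word (@galg m deg) S a (delta_mx 0 i) -> is_word (@galg m deg) S b (delta_mx 0 j) ->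
  gstrc deg i j = delta_mx 0 k -> is_word (@galg m deg) S (a + b) (delta_mx 0 k).
Proof. by move=> h1 h2 e; rewrite -e -[gstrc _ _ _](amul_delta (galg deg)); apply: word_mul. Qed.

End Alg.

Section T.
Variable F : fieldType.
Definition oo (n k : nat) (h : (k < n)%N) : 'I_n := Ordinal h.
Definition ee (n k : nat) (h : (k < n)%N) : 'rV[F]_n := delta_mx 0 (oo h).

Lemma c21 : exists A : nalgebra F 2, is_unital A /\ alg_length_is A 1.
Proof.
pose deg := fun k : 'I_2 => nth 0%N [:: 0; 1]%N k.
exists (galg F deg).
apply: (galg_ok (S := [:: @ee 2 1 isT]) (kD := @oo 2 1 isT)).
- by case=> [[|[|?]] ?].
- by case=> [[|[|?]] ?].
- by [].
- by move=> s; rewrite inE => /eqP ->; exists (@oo 2 1 isT).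
case=> [[|[|?]] h] //.
- by exists 0%N; split => //; rewrite (_ : Ordinal h = ord0); [apply: word_one | apply: val_inj].
- exists 1%N; rewrite (_ : Ordinal h = @oo 2 1 isT); last by apply: val_inj.
  by split => //; apply: word_gen; rewrite inE.
Qed.

Lemma c31 : exists A : nalgebra F 3, is_unital A /\ alg_length_is A 1.
Proof.
pose deg := fun k : 'I_3 => nth 0%N [:: 0; 1; 1]%N k.
exists (galg F deg).
apply: (galg_ok (S := [:: @ee 3 1 isT; @ee 3 2 isT]) (kD := @oo 3 1 isT)).
- by case=> [[|[|[|?]]] ?].
- by case=> [[|[|[|?]]] ?].
- by [].
- move=> s; rewrite !inE => /orP [] /eqP ->; first by exists (@oo 3 1 isT).
  by exists (@oo 3 2 isT).
case=> [[|[|[|?]]] h] //.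
- by exists 0%N; split => //; rewrite (_ : Ordinal h = ord0); [apply: word_one | apply: val_inj].
- exists 1%N; rewrite (_ : Ordinal h = @oo 3 1 isT); last by apply: val_inj.
  by split => //; apply: word_gen; rewrite !inE eqxx.
- exists 1%N; rewrite (_ : Ordinal h = @oo 3 2 isT); last by apply: val_inj.
  by split => //; apply: word_gen; rewrite !inE eqxx orbT.
Qed.

Lemma c32 : exists A : nalgebra F 3, is_unital A /\ alg_length_is A 2.
Proof.
pose deg := fun k : 'I_3 => nth 0%N [:: 0; 1; 2]%N k.
exists (galg F deg).
apply: (galg_ok (S := [:: @ee 3 1 isT]) (kD := @oo 3 2 isT)).
- by case=> [[|[|[|?]]] ?].
- by case=> [[|[|[|?]]] ?].
- by [].
- by move=> s; rewrite inE => /eqP ->; exists (@oo 3 1 isT).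
have w1 : is_word (galg F deg) [:: @ee 3 1 isT] 1 (@ee 3 1 isT).
  by apply: word_gen; rewrite inE.
have w2 : is_word (galg F deg) [:: @ee 3 1 isT] 2 (@ee 3 2 isT).
  apply: (wmul w1 w1); apply/rowP => k; rewrite !mxE.
  by case: k => [[|[|[|?]]] ?].
case=> [[|[|[|?]]] h] //.
- by exists 0%N; split => //; rewrite (_ : Ordinal h = ord0); [apply: word_one | apply: val_inj].
- by exists 1%N; rewrite (_ : Ordinal h = @oo 3 1 isT) //; apply: val_inj.
- by exists 2%N; rewrite (_ : Ordinal h = @oo 3 2 isT) //; apply: val_inj.
Qed.

Lemma c41 : exists A : nalgebra F 4, is_unital A /\ alg_length_is A 1.
Proof.
pose deg := fun k : 'I_4 => nth 0%N [:: 0; 1; 1; 1]%N k.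
exists (galg F deg).
apply: (galg_ok (S := [:: @ee 4 1 isT; @ee 4 2 isT; @ee 4 3 isT]) (kD := @oo 4 1 isT)).
- by case=> [[|[|[|[|?]]]] ?].
- by case=> [[|[|[|[|?]]]] ?].
- by [].
- move=> s; rewrite !inE => /or3P [] /eqP ->; first by exists (@oo 4 1 isT).
    by exists (@oo 4 2 isT).
  by exists (@oo 4 3 isT).
case=> [[|[|[|[|?]]]] h] //.
- by exists 0%N; split => //; rewrite (_ : Ordinal h = ord0); [apply: word_one | apply: val_inj].
- exists 1%N; rewrite (_ : Ordinal h = @oo 4 1 isT); last by apply: val_inj.
  by split => //; apply: word_gen; rewrite !inE eqxx.
- exists 1%N; rewrite (_ : Ordinal h = @oo 4 2 isT); last by apply: val_inj.
  by split => //; apply: word_gen; rewrite !inE eqxx ?orbT.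
- exists 1%N; rewrite (_ : Ordinal h = @oo 4 3 isT); last by apply: val_inj.
  by split => //; apply: word_gen; rewrite !inE eqxx ?orbT.
Qed.

Lemma c42 : exists A : nalgebra F 4, is_unital A /\ alg_length_is A 2.
Proof.
pose deg := fun k : 'I_4 => nth 0%N [:: 0; 1; 1; 2]%N k.
exists (galg F deg).
apply: (galg_ok (S := [:: @ee 4 1 isT; @ee 4 2 isT]) (kD := @oo 4 3 isT)).
- by case=> [[|[|[|[|?]]]] ?].
- by case=> [[|[|[|[|?]]]] ?].
- by [].
- move=> s; rewrite !inE => /orP [] /eqP ->; first by exists (@oo 4 1 isT).
  by exists (@oo 4 2 isT).
have w1 : is_word (galg F deg) [:: @ee 4 1 isT; @ee 4 2 isT] 1 (@ee 4 1 isT).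
  by apply: word_gen; rewrite !inE eqxx.
have w1' : is_word (galg F deg) [:: @ee 4 1 isT; @ee 4 2 isT] 1 (@ee 4 2 isT).
  by apply: word_gen; rewrite !inE eqxx orbT.
have w2 : is_word (galg F deg) [:: @ee 4 1 isT; @ee 4 2 isT] 2 (@ee 4 3 isT).
  apply: (wmul w1 w1); apply/rowP => k; rewrite !mxE.
  by case: k => [[|[|[|[|?]]]] ?].
case=> [[|[|[|[|?]]]] h] //.
- by exists 0%N; split => //; rewrite (_ : Ordinal h = ord0); [apply: word_one | apply: val_inj].
- by exists 1%N; rewrite (_ : Ordinal h = @oo 4 1 isT) //; apply: val_inj.
- by exists 1%N; rewrite (_ : Ordinal h = @oo 4 2 isT) //; apply: val_inj.
- by exists 2%N; rewrite (_ : Ordinal h = @oo 4 3 isT) //; apply: val_inj.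
Qed.

Lemma c43 : exists A : nalgebra F 4, is_unital A /\ alg_length_is A 3.
Proof.
pose deg := fun k : 'I_4 => nth 0%N [:: 0; 1; 2; 3]%N k.
exists (galg F deg).
apply: (galg_ok (S := [:: @ee 4 1 isT]) (kD := @oo 4 3 isT)).
- by case=> [[|[|[|[|?]]]] ?].
- by case=> [[|[|[|[|?]]]] ?].
- by [].
- by move=> s; rewrite inE => /eqP ->; exists (@oo 4 1 isT).
have w1 : is_word (galg F deg) [:: @ee 4 1 isT] 1 (@ee 4 1 isT).
  by apply: word_gen; rewrite inE.
have w2 : is_word (galg F deg) [:: @ee 4 1 isT] 2 (@ee 4 2 isT).
  apply: (wmul w1 w1); apply/rowP => k; rewrite !mxE.
  by case: k => [[|[|[|[|?]]]] ?].
have w3 : is_word (galg F deg) [:: @ee 4 1 isT] 3 (@ee 4 3 isT).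
  apply: (wmul w1 w2); apply/rowP => k; rewrite !mxE.
  by case: k => [[|[|[|[|?]]]] ?].
case=> [[|[|[|[|?]]]] h] //.
- by exists 0%N; split => //; rewrite (_ : Ordinal h = ord0); [apply: word_one | apply: val_inj].
- by exists 1%N; rewrite (_ : Ordinal h = @oo 4 1 isT) //; apply: val_inj.
- by exists 2%N; rewrite (_ : Ordinal h = @oo 4 2 isT) //; apply: val_inj.
- by exists 3%N; rewrite (_ : Ordinal h = @oo 4 3 isT) //; apply: val_inj.
Qed.

Lemma c44 : exists A : nalgebra F 4, is_unital A /\ alg_length_is A 4.
Proof.
pose deg := fun k : 'I_4 => nth 0%N [:: 0; 1; 2; 4]%N k.
exists (galg F deg).
apply: (galg_ok (S := [:: @ee 4 1 isT]) (kD := @oo 4 3 isT)).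
- by case=> [[|[|[|[|?]]]] ?].
- by case=> [[|[|[|[|?]]]] ?].
- by [].
- by move=> s; rewrite inE => /eqP ->; exists (@oo 4 1 isT).
have w1 : is_word (galg F deg) [:: @ee 4 1 isT] 1 (@ee 4 1 isT).
  by apply: word_gen; rewrite inE.
have w2 : is_word (galg F deg) [:: @ee 4 1 isT] 2 (@ee 4 2 isT).
  apply: (wmul w1 w1); apply/rowP => k; rewrite !mxE.
  by case: k => [[|[|[|[|?]]]] ?].
have w4 : is_word (galg F deg) [:: @ee 4 1 isT] 4 (@ee 4 3 isT).
  apply: (wmul w2 w2); apply/rowP => k; rewrite !mxE.
  by case: k => [[|[|[|[|?]]]] ?].
case=> [[|[|[|[|?]]]] h] //.
- by exists 0%N; split => //; rewrite (_ : Ordinal h = ord0); [apply: word_one | apply: val_inj].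
- by exists 1%N; rewrite (_ : Ordinal h = @oo 4 1 isT) //; apply: val_inj.
- by exists 2%N; rewrite (_ : Ordinal h = @oo 4 2 isT) //; apply: val_inj.
- by exists 4%N; rewrite (_ : Ordinal h = @oo 4 3 isT) //; apply: val_inj.
Qed.
End T.

Theorem proposition3p7 (F : fieldType) (n : nat) :
  (2 <= n <= 4)%N ->
  forall l : nat, (1 <= l <= 2 ^ (n - 2))%N ->
  exists A : nalgebra F n, is_unital A /\ alg_length_is A l.
Proof.
case: n => [|[|[|[|[|n]]]]] //= _ [|[|[|[|[|l]]]]] //= _.
- exact: c21.
- exact: c31.
- exact: c32.
- exact: c41.
- exact: c42.
- exact: c43.
- exact: c44.
Qed.
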